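(* Assume $\mathcal S$ and $\mathcal A$ are finite. For $\sigma>0$ let $\pi^*_\sigma$ be an optimal policy of $\mathcal M_\sigma$ (every action in $\mathrm{supp}(\pi^*_\sigma(\cdot\mid s))$ maximizes $Q^*_\sigma(s,\cdot)$, the optimal $Q$-function of $\mathcal M_\sigma$). Then for every $\epsilon>0$ there exists $\sigma'>0$ such that for all $0<\sigma<\sigma'$, all $s\in\mathcal S$ and all $a'\in\mathrm{supp}(\pi^*_\sigma(\cdot\mid s))$, $$\min_{a\in\mathrm{supp}(p_D(\cdot\mid s))}\|a'-a\|_2^2<\epsilon .$$
   Context: Setting: finite state space $\mathcal S$, finite action space $\mathcal A\subset\mathbb R^n$, discount $\gamma\in(0,1)$, reward $R(s,a)$. Dataset distribution $p_D$: action distributions $p_D(a\mid s)$ with support $\mathrm{supp}(p_D(\cdot\mid s))\subseteq\mathcal A$ (the dataset actions at $s$) and transitions $p_D(s'\mid s,a)$. A noise distribution $q_\sigma(\cdot\mid a)$ ($a\in\mathcal A$, $\sigma>0$) is a probability mass function positive on $\mathcal A$ satisfying: for all $a,a_1,a_2\in\mathcal A$, if $\|a_1-a\|_2^2>\|a_2-a\|_2^2$ then $q_\sigma(a\mid a_1)/q_\sigma(a\mid a_2)\to0$ as $\sigma\to0^+$, and if equal then the ratio $\to1$. For $\sigma>0$, $\mathcal M_\sigma=(\mathcal S,\mathcal A,R_\sigma,P_\sigma,\gamma)$ is the Noisy Action MDP with $p_D(a'\mid s,a,\sigma)=q_\sigma(a'\mid a)p_D(a\mid s)/\sum_b q_\sigma(a'\mid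 b)p_D(b\mid s)$, $P_\sigma(s'\mid s,a')=\sum_a p_D(s'\mid s,a)p_D(a'\mid s,a,\sigma)$, $R_\sigma(s,a')=\sum_a p_D(a'\mid s,a,\sigma)(R(s,a)-\|a-a'\|_2^2)$. *)

(* Defs.v *)
From HB Require Import structures.
From mathcomp Require Import all_boot all_order all_algebra.
From mathcomp Require Import all_classical all_reals all_analysis.
Set Implicit Arguments. Unset Strict Implicit. Unset Printing Implicit Defensive.
Import Order.TTheory GRing.Theory Num.Theory.
Import numFieldNormedType.Exports.
Local Open Scope classical_set_scope.
Local Open Scope ring_scope.

Section NoisyMDP.
Variables (R : realType) (n : nat) (S A : finType).

Definition sqdist (emb : A -> 'rV[R]_n) (a b : A) : R :=
  \sum_(i < n) (emb a 0 i - emb b 0 i) ^+ 2.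

(* maximum of a function over a finite type (0 if the type is empty) *)
Definition fmax (T : finType) (f : T -> R) : R :=
  match [pick x : T] with
  | Some x0 => \big[Num.max/f x0]_(x : T) f x
  | None => 0
  end.

(* minimum of f over {x | P x} (0 if that set is empty) *)
Definition fmin_over (T : finType) (P : pred T) (f : T -> R) : R :=
  match [pick x | P x] with
  | Some x0 => \big[Num.min/f x0]_(x | P x) f x
  | None => 0
  end.

Definition is_pmf (T : finType) (p : T -> R) : Prop :=
  (forall x, 0 <= p x) /\ \sum_(x : T) p x = 1.

(* noise distribution q sigma a' a = q_sigma(a' | a) *)
Definition is_noise (emb : A -> 'rV[R]_n) (q : R -> A -> A -> R) : Prop :=
  (forall sigma, 0 < sigma -> forall a, (forall a', 0 < q sigma a' a)
                                        /\ \sum_(a' : A) q sigma a' a = 1) /\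
  (forall a a1 a2, sqdist emb a2 a < sqdist emb a1 a ->
     (fun sigma => q sigma a a1 / q sigma a a2) @ 0^'+ --> (0 : R)) /\
  (forall a a1 a2, sqdist emb a1 a = sqdist emb a2 a ->
     (fun sigma => q sigma a a1 / q sigma a a2) @ 0^'+ --> (1 : R)).

Definition post (q : R -> A -> A -> R) (pDa : S -> A -> R) (sigma : R)
    (s : S) (a' a : A) : R :=
  q sigma a' a * pDa s a / \sum_(b : A) q sigma a' b * pDa s b.

Definition Psigma (q : R -> A -> A -> R) (pDa : S -> A -> R)
    (pDs : S -> A -> S -> R) (sigma : R) (s : S) (a' : A) (s' : S) : R :=
  \sum_(a : A) pDs s a s' * post q pDa sigma s a' a.

Definition Rsigma (emb : A -> 'rV[R]_n) (q : R -> A -> A -> R)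
    (pDa : S -> A -> R) (Rw : S -> A -> R) (sigma : R) (s : S) (a' : A) : R :=
  \sum_(a : A) post q pDa sigma s a' a * (Rw s a - sqdist emb a a').

(* Q is the optimal Q-function of M_sigma: the (unique, by contraction)
   solution of the Bellman optimality equation. *)
Definition is_optimal_Q (emb : A -> 'rV[R]_n) (q : R -> A -> A -> R)
    (pDa : S -> A -> R) (pDs : S -> A -> S -> R) (Rw : S -> A -> R)
    (gamma sigma : R) (Q : S -> A -> R) : Prop :=
  forall s a', Q s a' = Rsigma emb q pDa Rw sigma s a'
     + gamma * \sum_(s' : S) Psigma q pDa pDs sigma s a' s' * fmax (Q s').

End NoisyMDP.

(* Main.v *)
Require Import Defs.
From HB Require Import structures.
From mathcomp Require Import all_boot all_order all_algebra.
From mathcomp Require Import all_classical all_reals all_analysis.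
From mathcomp Require Import ring lra.
Import Order.TTheory GRing.Theory Num.Theory.
Import numFieldNormedType.Exports.
Local Open Scope classical_set_scope.
Local Open Scope ring_scope.

Lemma near_right0 (R : realType) (P : R -> Prop) :
  (\forall x \near 0^'+, P x) -> exists2 e : R, 0 < e & forall x, 0 < x -> x < e -> P x.
Proof.
move=> /nbhs_ballP [e e0 H]; exists e => // x x0 xe.
apply: H => //; rewrite /ball /= sub0r normrN gtr0_norm //.
Qed.

Lemma le_sum_term (R : realType) (I : finType) (F : I -> R) i :
  (forall j, 0 <= F j) -> F i <= \sum_j F j.
Proof. by move=> h; rewrite (bigD1 i) //= lerDl sumr_ge0. Qed.

Section Aux.
Variables (R : realType) (n : nat) (S A : finType) (emb : A -> 'rV[R]_n).

Lemma sqdist_ge0 a b : 0 <= sqdist emb a b.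
Proof. by apply: sumr_ge0 => i _; rewrite sqr_ge0. Qed.

Lemma sqdist_sym a b : sqdist emb a b = sqdist emb b a.
Proof. by apply: eq_bigr => i _; rewrite -sqrrN opprB. Qed.

Lemma sqdist_self a : sqdist emb a a = 0.
Proof. by apply: big1 => i _; rewrite subrr expr0n. Qed.

Lemma sqdist_pos a b : injective emb -> a != b -> 0 < sqdist emb a b.
Proof.
move=> inj ab.
have eab : emb a != emb b by rewrite (inj_eq inj).
case/boolP: [exists i, emb a 0 i != emb b 0 i] => [/existsP[i hi]|/existsPn h].
  rewrite /sqdist (bigD1 i) //=.
  have h1 : 0 < (emb a 0 i - emb b 0 i) ^+ 2.
    by rewrite lt_def sqr_ge0 andbT sqrf_eq0 subr_eq0.
  apply: (lt_le_trans h1); rewrite lerDl.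
  by apply: sumr_ge0 => j _; rewrite sqr_ge0.
exfalso; move/negP: eab; apply; apply/eqP/rowP => i; apply/eqP.
by move: (h i); rewrite negbK.
Qed.

Lemma fmax_bound (f : A -> R) m : 0 <= m -> (forall x, `|f x| <= m) -> `|fmax f| <= m.
Proof.
move=> m0 h; rewrite /fmax; case: pickP => [x0 _|_]; last by rewrite normr0.
apply: (big_ind (fun v => `|v| <= m)) => // u v hu hv.
by rewrite /Num.max; case: ifP.
Qed.
End Aux.

Section Post.
Variables (R : realType) (n : nat) (S A : finType) (emb : A -> 'rV[R]_n).
Variables (q : R -> A -> A -> R) (pDa : S -> A -> R) (pDs : S -> A -> S -> R)
  (Rw : S -> A -> R) (gamma : R).
Hypothesis hpDa : forall s, is_pmf (pDa s).
Hypothesis hpDs : forall s a, is_pmf (pDs s a).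
Hypothesis hqpos : forall sigma : R, 0 < sigma -> forall a a', 0 < q sigma a' a.

Lemma pDa_le1 s a : pDa s a <= 1.
Proof. by case: (hpDa s) => h0 h1; rewrite -h1; apply: le_sum_term. Qed.

Lemma Z_ge sigma s x b : 0 < sigma ->
  q sigma x b * pDa s b <= \sum_c q sigma x c * pDa s c.
Proof.
move=> hs; apply: (@le_sum_term _ _ (fun c => q sigma x c * pDa s c)) => j.
by apply: mulr_ge0; [apply: ltW; apply: hqpos | case: (hpDa s)].
Qed.

Lemma exists_data s : exists b, 0 < pDa s b.
Proof.
case: (pickP (fun b => 0 < pDa s b)) => [b0 hb0|h0]; first by exists b0.
exfalso; case: (hpDa s) => hge hsum.
have : \sum_b pDa s b = 0.
  by apply: big1 => b _; apply/eqP; rewrite eq_le hge andbT leNgt h0.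
by rewrite hsum => /eqP; rewrite oner_eq0.
Qed.

Lemma Z_pos sigma s x : 0 < sigma -> 0 < \sum_c q sigma x c * pDa s c.
Proof.
move=> hs; have [b hb] := exists_data s.
apply: (lt_le_trans _ (@Z_ge sigma s x b hs)); apply: mulr_gt0 => //; exact: hqpos.
Qed.

Lemma post_ge0 sigma s x a : 0 < sigma -> 0 <= post q pDa sigma s x a.
Proof.
move=> hs; rewrite /post; apply: divr_ge0; last exact: ltW (Z_pos sigma s x hs).
by apply: mulr_ge0; [apply: ltW; apply: hqpos | case: (hpDa s)].
Qed.

Lemma post_sum1 sigma s x : 0 < sigma -> \sum_a post q pDa sigma s x a = 1.
Proof.
move=> hs; rewrite /post -mulr_suml divff //; exact: lt0r_neq0 (Z_pos sigma s x hs).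
Qed.

Lemma post0 sigma s x a : pDa s a = 0 -> post q pDa sigma s x a = 0.
Proof. by move=> h; rewrite /post h mulr0 mul0r. Qed.

Definition Vf (Q : S -> A -> R) s' := fmax (Q s').
Definition Hf (Q : S -> A -> R) s a :=
  Rw s a + gamma * \sum_s' pDs s a s' * fmax (Q s').

Lemma Q_decomp sigma Q : is_optimal_Q emb q pDa pDs Rw gamma sigma Q ->
  forall s x, Q s x = \sum_a post q pDa sigma s x a * (Hf Q s a - sqdist emb a x).
Proof.
move=> hQ s x; rewrite hQ /Rsigma /Psigma.
have -> : \sum_s' (\sum_a pDs s a s' * post q pDa sigma s x a) * fmax (Q s') =
    \sum_a post q pDa sigma s x a * \sum_s' pDs s a s' * fmax (Q s').
  transitivity (\sum_s' \sum_a pDs s a s' * post q pDa sigma s x a * fmax (Q s')).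
    by apply: eq_bigr => s' _; rewrite mulr_suml.
  rewrite exchange_big; apply: eq_bigr => a _; rewrite mulr_sumr.
  by apply: eq_bigr => s' _; ring.
rewrite [gamma * _]mulr_sumr -big_split; apply: eq_bigr => a _; rewrite /Hf /=; ring.
Qed.
Definition Cst := \sum_(i : S * A) `|Rw i.1 i.2| + \sum_(i : A * A) sqdist emb i.1 i.2.

Lemma Cst_ge0 : 0 <= Cst.
Proof.
by apply: addr_ge0; apply: sumr_ge0 => i _ //; apply: sqdist_ge0.
Qed.

Lemma Hf_bound Q s a x (m : R) : 0 <= gamma -> (forall s', `|fmax (Q s')| <= m) ->
  `|Hf Q s a - sqdist emb a x| <= Cst + gamma * m.
Proof.
move=> g0 hV.
have hW : `|\sum_s' pDs s a s' * fmax (Q s')| <= m.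
  apply: (le_trans (ler_norm_sum _ _ _)).
  apply: (@le_trans _ _ (\sum_s' pDs s a s' * m)).
    apply: ler_sum => s' _; rewrite normrM ger0_norm; last by case: (hpDs s a).
    by apply: ler_wpM2l => //; case: (hpDs s a).
  by rewrite -mulr_suml; case: (hpDs s a) => _ ->; rewrite mul1r.
have h1 : `|Rw s a| <= \sum_(i : S * A) `|Rw i.1 i.2|.
  exact: (@le_sum_term _ _ (fun i : S * A => `|Rw i.1 i.2|) (s, a)).
have h2 : sqdist emb a x <= \sum_(i : A * A) sqdist emb i.1 i.2.
  by apply: (@le_sum_term _ _ (fun i : A * A => sqdist emb i.1 i.2) (a, x)) => j; apply: sqdist_ge0.
have h3 : gamma * `|\sum_s' pDs s a s' * fmax (Q s')| <= gamma * m by apply: ler_wpM2l.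
rewrite /Hf; apply: (le_trans (ler_normB _ _)).
apply: (le_trans (lerD (ler_normD _ _) (lexx _))).
rewrite normrM (ger0_norm g0) (ger0_norm (@sqdist_ge0 _ _ _ emb a x)).
rewrite /Cst; lra.
Qed.

Lemma Q_bound (sigma : R) Q : 0 < sigma -> 0 <= gamma < 1 ->
  is_optimal_Q emb q pDa pDs Rw gamma sigma Q ->
  forall s x, `|Q s x| <= Cst / (1 - gamma).
Proof.
move=> hs /andP[g0 g1] hQ.
set m : R := \big[Num.max/0]_(i : S * A) `|Q i.1 i.2|.
have m0 : 0 <= m by apply: bigmax_ge_id.
have hle : forall s x, `|Q s x| <= m.
  by move=> s x; exact: (@le_bigmax _ _ _ 0 (fun i : S * A => `|Q i.1 i.2|) (s, x)).
have hV : forall s', `|fmax (Q s')| <= m by move=> s'; apply: fmax_bound.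
have hQb : forall s x, `|Q s x| <= Cst + gamma * m.
  move=> s x; rewrite (@Q_decomp sigma Q hQ s x); apply: (le_trans (ler_norm_sum _ _ _)).
  apply: (@le_trans _ _ (\sum_a post q pDa sigma s x a * (Cst + gamma * m))).
    apply: ler_sum => a _; rewrite normrM (ger0_norm (@post_ge0 sigma s x a hs)).
    by apply: ler_wpM2l; [exact: post_ge0 | exact: Hf_bound].
  by rewrite -mulr_suml post_sum1 // mul1r.
have hm : m <= Cst + gamma * m.
  apply: bigmax_le => [|i _]; last exact: hQb.
  by apply: addr_ge0; [exact: Cst_ge0 | exact: mulr_ge0].
have hm2 : m <= Cst / (1 - gamma).
  rewrite ler_pdivlMr ?subr_gt0 //; nra.
by move=> s x; apply: (le_trans (hle s x)).
Qed.
End Post.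

Theorem mainTheorem7 (R : realType) (n : nat) (S A : finType)
  (emb : A -> 'rV[R]_n) (emb_inj : injective emb)
  (gamma : R) (hgamma : 0 < gamma < 1)
  (Rw : S -> A -> R)
  (pDa : S -> A -> R) (hpDa : forall s, is_pmf (pDa s))
  (pDs : S -> A -> S -> R) (hpDs : forall s a, is_pmf (pDs s a))
  (q : R -> A -> A -> R) (hq : is_noise emb q)
  (Q : R -> S -> A -> R)
  (hQ : forall sigma, 0 < sigma -> is_optimal_Q emb q pDa pDs Rw gamma sigma (Q sigma))
  (pi : R -> S -> A -> R)
  (hpi_pmf : forall sigma, 0 < sigma -> forall s, is_pmf (pi sigma s))
  (hpi_opt : forall sigma, 0 < sigma -> forall s a', 0 < pi sigma s a' ->
               forall b, Q sigma s b <= Q sigma s a') :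
  forall eps : R, 0 < eps ->
  exists sigma' : R, 0 < sigma' /\
    forall sigma, 0 < sigma -> sigma < sigma' ->
    forall s a', 0 < pi sigma s a' ->
      fmin_over (fun a => 0 < pDa s a) (fun a => sqdist emb a' a) < eps.
Proof.
move=> eps heps.
have Fap : Filter (nbhs ((0:R)^'+)) by exact: at_right_proper_filter.
case: hq => hq1 [hq2 _].
have hqpos : forall sigma : R, 0 < sigma -> forall a a', 0 < q sigma a' a.
  by move=> sg hs a a'; case: (hq1 sg hs a) => h _; exact: h.
case/andP: hgamma => g0 g1.
set C := Cst R n S A emb Rw.
have C0 : 0 <= C by apply: Cst_ge0.
set Vb := C / (1 - gamma).
have Vb0 : 0 <= Vb by apply: divr_ge0 => //; rewrite subr_ge0 ltW.
set L := C + gamma * Vb.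
have L0 : 0 <= L by apply: addr_ge0 => //; apply: mulr_ge0 => //; exact: ltW.
set K := L + L.
have K0 : 0 <= K by apply: addr_ge0.
set N : R := #|A|%:R.
have N0 : 0 <= N by apply: ler0n.
pose dl s b := eps * pDa s b / ((K + 1) * (N + 1)).
have dlpos : forall s b, 0 < pDa s b -> 0 < dl s b.
  move=> s b hb; apply: divr_gt0; first exact: mulr_gt0.
  by apply: mulr_gt0; apply: ltr_wpDl => //; exact: ltr01.
have ev : forall i : (S * A) * A, \forall sg \near (0 : R)^'+,
    0 < pDa i.1.1 i.1.2 -> i.2 != i.1.2 ->
    q sg i.1.2 i.2 / q sg i.1.2 i.1.2 < dl i.1.1 i.1.2.
  move=> [[s b] a] /=.
  case: (boolP (0 < pDa s b)) => hb; last by apply: nearW => sg.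
  case: (boolP (a != b)) => ab; last by apply: nearW => sg.
  have hlt : sqdist emb b b < sqdist emb a b.
    by rewrite sqdist_self; apply: sqdist_pos.
  have hlim := hq2 b a b hlt.
  have := cvgr_lt _ hlim _ (dlpos s b hb).
  move=> /(_ (at_right_proper_filter _)) H.
  by apply: (filterS _ H) => sg h _ _.
have := @filter_forall _ _ _ _ (at_right_proper_filter _) ev; case/near_right0 => e e0 he.
exists e; split => // sg hs hse s a' hpi.
have hall := he sg hs hse.
have hQs := hQ sg hs.
set Hs := Hf R S A pDs Rw gamma (Q sg) s.
have [b0 hb0] := @exists_data _ _ _ pDa hpDa s.
have hVb : forall s', `|fmax (Q sg s')| <= Vb.
  move=> s'; apply: fmax_bound => // y.
  apply: (@Q_bound R n S A emb q pDa pDs Rw gamma hpDa hpDs hqpos sg (Q sg) hs _ hQs).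
  by rewrite (ltW g0) g1.
have hL : forall a x, `|Hs a - sqdist emb a x| <= L.
  by move=> a x; exact: (@Hf_bound R n S A emb pDs Rw gamma hpDs (Q sg) s a x Vb (ltW g0) hVb).
have hpost0 := @post_ge0 _ _ _ q pDa hpDa hqpos sg s.
have hpost1 := @post_sum1 _ _ _ q pDa hpDa hqpos sg s.
case: (@arg_maxP _ _ A b0 (fun a => 0 < pDa s a) Hs hb0) => b hb bmax.
rewrite ltNge; apply/negP => hge.
have hfar : forall a, 0 < pDa s a -> eps <= sqdist emb a' a.
  move=> a ha; move: hge; rewrite /fmin_over; case: pickP => [x0 _ | h0]; last first.
    by move: (h0 a); rewrite ha.
  move=> hge; apply: (le_trans hge); exact: bigmin_le_cond.
have hQa' : Q sg s a' <= Hs b - eps.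
  rewrite (@Q_decomp R n S A emb q pDa pDs Rw gamma sg (Q sg) hQs s a').
  apply: (@le_trans _ _ (\sum_a post q pDa sg s a' a * (Hs b - eps))).
    apply: ler_sum => a _.
    case: (boolP (0 < pDa s a)) => ha.
      apply: ler_wpM2l; first exact: hpost0.
      rewrite sqdist_sym; apply: lerB; [exact: bmax | exact: hfar].
    have h0 : pDa s a = 0.
      by apply/eqP; rewrite eq_le; case: (hpDa s) => h _; rewrite h andbT leNgt.
    by rewrite !(@post0 _ _ _ q pDa) // !mul0r.
  by rewrite -mulr_suml hpost1 // mul1r.
have hQb : Hs b - eps < Q sg s b.
  rewrite (@Q_decomp R n S A emb q pDa pDs Rw gamma sg (Q sg) hQs s b).
  set T := \sum_a _.
  suff h : Hs b - T < eps by lra.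
  have e1 : \sum_a post q pDa sg s b a * (Hs b - (Hs a - sqdist emb a b)) =
      \sum_a post q pDa sg s b a * Hs b - T.
    by rewrite /T -sumrB; apply: eq_bigr => a _ /=; rewrite /Hs; ring.
  rewrite -mulr_suml hpost1 // mul1r in e1; rewrite -e1.
  apply: (@le_lt_trans _ _ (\sum_(a : A) (K * dl s b / pDa s b))).
    apply: ler_sum => a _.
    have kd0 : 0 <= K * dl s b / pDa s b.
      by apply: divr_ge0; [apply: mulr_ge0 => //; exact: ltW (dlpos s b hb) | exact: ltW].
    case: (eqVneq a b) => [->|ab].
      by rewrite sqdist_self subr0 subrr mulr0.
    have hr : q sg b a / q sg b b < dl s b := hall ((s, b), a) hb ab.
    have hpb : post q pDa sg s b a <= dl s b / pDa s b.
      set x := q sg b a; set c := q sg b b * pDa s b.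
      set Z := \sum_c0 q sg b c0 * pDa s c0.
      have x0 : 0 < x by apply: hqpos.
      have c0 : 0 < c by apply: mulr_gt0 => //; apply: hqpos.
      have cZ : c <= Z by apply: (@Z_ge _ _ _ q pDa hpDa hqpos sg s b b hs).
      have Z0 : 0 < Z by apply: (lt_le_trans c0 cZ).
      have p1 : pDa s a <= 1 by apply: (@pDa_le1 _ _ _ pDa hpDa).
      have step1 : post q pDa sg s b a <= x / c.
        rewrite /post -/x -/Z ler_pdivrMr //.
        have e3 : x / c * c = x by rewrite divfK // gt_eqF.
        have i1 : x / c * c <= x / c * Z by apply: ler_wpM2l => //; apply: divr_ge0; exact: ltW.
        have i2 : x * pDa s a <= x by apply: ler_piMr; [exact: ltW | exact: p1].
        lra.
      apply: (le_trans step1).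
      have e4 : x / c = (x / q sg b b) / pDa s b by rewrite /c invfM mulrA.
      rewrite e4; apply: ler_wpM2r; [by rewrite invr_ge0 ltW | exact: ltW].
    have hK : Hs b - (Hs a - sqdist emb a b) <= K.
      have := hL a b; have := hL b b; rewrite sqdist_self subr0.
      rewrite !ler_norml => /andP[u1 u2] /andP[u3 u4]; rewrite /K; lra.
    apply: (@le_trans _ _ (post q pDa sg s b a * K)); first by apply: ler_wpM2l; [exact: hpost0 | exact: hK].
    apply: (@le_trans _ _ (dl s b / pDa s b * K)); first by apply: ler_wpM2r; [exact: K0 | exact: hpb].
    by rewrite mulrC mulrA.
  rewrite sumr_const -mulr_natl -/N.
  have e2 : K * dl s b / pDa s b = K * eps / ((K + 1) * (N + 1)).
    have hN1 : 0 < N + 1 by apply: ltr_wpDl => //; exact: ltr01.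
    have hK1 : 0 < K + 1 by apply: ltr_wpDl => //; exact: ltr01.
    rewrite /dl; field.
    by rewrite -/N (gt_eqF hN1) (gt_eqF hK1) (gt_eqF hb).
  rewrite e2 mulrA ltr_pdivrMr; last first.
    by apply: mulr_gt0; apply: ltr_wpDl => //; exact: ltr01.
  nra.
have := hpi_opt sg hs s a' hpi b.
lra.
Qed.
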